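(* Let $(E,\tau)$ be a locally convex space with a fundamental sequence $(B_n)_n$ of bounded sets. Then there exists a finest locally convex topology $\xi$ on $E$ having the same bounded sets as $\tau$, and $(E,\xi)$ has a $\mathfrak{G}$-base and has the strong Pytkeev property. Moreover, if $(E,\tau)$ is bornological, then $\tau=\xi$.
   Context: A fundamental sequence of bounded sets is a sequence of bounded sets such that every bounded set lies in one of them. An lcs is bornological if every absolutely convex bornivorous set is a neighborhood of zero. A $\mathfrak{G}$-base is a base $\{U_\alpha:\alpha\in\mathbb{N}^\mathbb{N}\}$ of neighborhoods of zero with $U_\beta\subseteq U_\alpha$ whenever $\alpha\le\beta$ coordinatewise. A space has the strong Pytkeev property if for each point $x$ there is a countable family $\mathcal{D}$ of subsets such that for each neighborhood $U$ of $x$ and each $A$ with $x\in\overline{A}\setminus A$ there is $D\in\mathcal{D}$ with $D\subseteq U$ and $D\cap A$ infinite. *)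

(* Defs.v *)
From Stdlib Require Import Reals List.
Open Scope R_scope.

Record VectorSpace := {
  vcar :> Type;
  vzero : vcar;
  vadd : vcar -> vcar -> vcar;
  vopp : vcar -> vcar;
  vscal : R -> vcar -> vcar;
  vadd_assoc : forall x y z, vadd x (vadd y z) = vadd (vadd x y) z;
  vadd_comm : forall x y, vadd x y = vadd y x;
  vadd_0 : forall x, vadd x vzero = x;
  vadd_opp : forall x, vadd x (vopp x) = vzero;
  vscal_assoc : forall a b x, vscal a (vscal b x) = vscal (a * b) x;
  vscal_1 : forall x, vscal 1 x = x;
  vscal_distr_l : forall a x y, vscal a (vadd x y) = vadd (vscal a x) (vscal a y);
  vscal_distr_r : forall a b x, vscal (a + b) x = vadd (vscal a x) (vscal b x)
}.

Arguments vzero {_}.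
Arguments vadd {_} _ _.
Arguments vopp {_} _.
Arguments vscal {_} _ _.

Definition subset {X : Type} (A B : X -> Prop) : Prop := forall x, A x -> B x.

Definition is_topology {X : Type} (T : (X -> Prop) -> Prop) : Prop :=
  T (fun _ => True) /\
  (forall U V, T U -> T V -> T (fun x => U x /\ V x)) /\
  (forall F : (X -> Prop) -> Prop, (forall U, F U -> T U) ->
     T (fun x => exists U, F U /\ U x)).

Definition nbhd {X : Type} (T : (X -> Prop) -> Prop) (x : X) (N : X -> Prop) : Prop :=
  exists U, T U /\ U x /\ subset U N.

Definition closure {X : Type} (T : (X -> Prop) -> Prop) (A : X -> Prop) (x : X) : Prop :=
  forall N, nbhd T x N -> exists y, N y /\ A y.

Definition finite_set {X : Type} (A : X -> Prop) : Prop :=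
  exists l : list X, forall x, A x -> In x l.

Section LCS.
Context {E : VectorSpace}.

Definition add_continuous (T : (E -> Prop) -> Prop) : Prop :=
  forall x y W, nbhd T (vadd x y) W ->
    exists U V, nbhd T x U /\ nbhd T y V /\
      forall u v, U u -> V v -> W (vadd u v).

Definition scal_continuous (T : (E -> Prop) -> Prop) : Prop :=
  forall a x W, nbhd T (vscal a x) W ->
    exists d U, 0 < d /\ nbhd T x U /\
      forall b u, Rabs (b - a) < d -> U u -> W (vscal b u).

Definition convex (C : E -> Prop) : Prop :=
  forall x y t, C x -> C y -> 0 <= t <= 1 ->
    C (vadd (vscal t x) (vscal (1 - t) y)).

Definition absolutely_convex (C : E -> Prop) : Prop :=
  forall x y a b, C x -> C y -> Rabs a + Rabs b <= 1 ->
    C (vadd (vscal a x) (vscal b y)).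

Definition hausdorff (T : (E -> Prop) -> Prop) : Prop :=
  forall x y, x <> y -> exists U V, nbhd T x U /\ nbhd T y V /\
    forall z, ~ (U z /\ V z).

Definition lc_topology (T : (E -> Prop) -> Prop) : Prop :=
  is_topology T /\ add_continuous T /\ scal_continuous T /\ hausdorff T /\
  (forall N, nbhd T vzero N -> exists C, nbhd T vzero C /\ convex C /\ subset C N).

Definition absorbs (U B : E -> Prop) : Prop :=
  exists t, 0 < t /\ forall s, t <= Rabs s ->
    forall b, B b -> exists u, U u /\ b = vscal s u.

Definition vbounded (T : (E -> Prop) -> Prop) (B : E -> Prop) : Prop :=
  forall U, nbhd T vzero U -> absorbs U B.

Definition bornivorous (T : (E -> Prop) -> Prop) (U : E -> Prop) : Prop :=
  forall B, vbounded T B -> absorbs U B.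

Definition bornological (T : (E -> Prop) -> Prop) : Prop :=
  forall U, absolutely_convex U -> bornivorous T U -> nbhd T vzero U.

Definition fundamental_bounded_seq (T : (E -> Prop) -> Prop) (B : nat -> E -> Prop) : Prop :=
  (forall n, vbounded T (B n)) /\
  (forall A, vbounded T A -> exists n, subset A (B n)).

Definition has_G_base (T : (E -> Prop) -> Prop) : Prop :=
  exists U : (nat -> nat) -> E -> Prop,
    (forall al, nbhd T vzero (U al)) /\
    (forall N, nbhd T vzero N -> exists al, subset (U al) N) /\
    (forall al be, (forall i, (al i <= be i)%nat) -> subset (U be) (U al)).

Definition strong_Pytkeev (T : (E -> Prop) -> Prop) : Prop :=
  forall x, exists D : nat -> E -> Prop,
    forall U A, nbhd T x U -> closure T A x -> ~ A x ->
      exists n, subset (D n) U /\ ~ finite_set (fun y => D n y /\ A y).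

End LCS.

(* Main.v *)
Require Import Defs.
From Stdlib Require Import Reals Lra Lia List Classical ClassicalEpsilon FunctionalExtensionality PropExtensionality Cantor.
Open Scope R_scope.

Arguments vadd_assoc {_}. Arguments vadd_comm {_}. Arguments vadd_0 {_}. Arguments vadd_opp {_}.
Arguments vscal_assoc {_}. Arguments vscal_1 {_}. Arguments vscal_distr_l {_}. Arguments vscal_distr_r {_}.

Section V.
Context {E : VectorSpace}.

Lemma v0l (x : E) : vadd vzero x = x.
Proof. rewrite vadd_comm; apply vadd_0. Qed.

Lemma vcancel (x y z : E) : vadd x y = vadd x z -> y = z.
Proof.
  intro H. assert (H2 : vadd (vopp x) (vadd x y) = vadd (vopp x) (vadd x z)) by (rewrite H; reflexivity).
  rewrite !vadd_assoc in H2. rewrite (vadd_comm (vopp x) x), vadd_opp, !v0l in H2. exact H2.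
Qed.

Lemma vsub_l (x y : E) : vadd x (vadd (vopp x) y) = y.
Proof. rewrite vadd_assoc, vadd_opp, v0l; reflexivity. Qed.

Lemma vsub_l' (x y : E) : vadd (vopp x) (vadd x y) = y.
Proof. rewrite vadd_assoc, (vadd_comm (vopp x) x), vadd_opp, v0l; reflexivity. Qed.

Lemma vscal0 (x : E) : vscal 0 x = vzero.
Proof.
  apply (vcancel (vscal 0 x)). rewrite vadd_0, <- vscal_distr_r. f_equal; ring.
Qed.

Lemma vscalz (a : R) : vscal a (@vzero E) = vzero.
Proof. rewrite <- (vscal0 vzero), vscal_assoc. f_equal; ring. Qed.

Lemma vscal_inv (s : R) (x : E) : s <> 0 -> vscal s (vscal (/ s) x) = x.
Proof. intro H. rewrite vscal_assoc, Rinv_r by exact H. apply vscal_1. Qed.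

Lemma vscal_inj (s : R) (x y : E) : s <> 0 -> vscal s x = vscal s y -> x = y.
Proof.
  intros H H2. rewrite <- (vscal_1 x), <- (vscal_1 y), <- (Rinv_l s H), <- !vscal_assoc, H2. reflexivity.
Qed.

Lemma vscal_comm (a b : R) (x : E) : vscal a (vscal b x) = vscal b (vscal a x).
Proof. rewrite !vscal_assoc; f_equal; ring. Qed.

Lemma vadd_swap4 (a b c d : E) : vadd (vadd a b) (vadd c d) = vadd (vadd a c) (vadd b d).
Proof.
  rewrite <- !vadd_assoc. f_equal. rewrite !vadd_assoc. f_equal. apply vadd_comm.
Qed.

Lemma vscal_split (a b : R) (x : E) : vscal b x = vadd (vscal a x) (vscal (b - a) x).
Proof. rewrite <- vscal_distr_r. f_equal; ring. Qed.

End V.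

Section T.
Context {E : VectorSpace}.
Implicit Types T : (E -> Prop) -> Prop.

Lemma nbhd_mono T x (N N' : E -> Prop) : nbhd T x N -> subset N N' -> nbhd T x N'.
Proof. intros [U [H1 [H2 H3]]] H. exists U; repeat split; auto. intros y Hy; auto. Qed.

Lemma nbhd_pt T x N : nbhd T x N -> N x.
Proof. intros [U [_ [H2 H3]]]; auto. Qed.

Lemma nbhd_to0 T x N : add_continuous T -> nbhd T x N -> nbhd T vzero (fun v => N (vadd x v)).
Proof.
  intros Ha H. rewrite <- (vadd_0 x) in H. destruct (Ha _ _ _ H) as [U [V [HU [HV H3]]]].
  apply (nbhd_mono _ _ _ _ HV). intros v Hv. apply H3; auto. exact (nbhd_pt _ _ _ HU).
Qed.

Lemma nbhd_from0 T x N : add_continuous T -> nbhd T vzero N ->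
  nbhd T x (fun z => N (vadd (vopp x) z)).
Proof.
  intros Ha H. assert (H' : nbhd T (vadd (vopp x) x) N).
  { rewrite vadd_comm, vadd_opp; exact H. }
  destruct (Ha _ _ _ H') as [U [V [HU [HV H3]]]].
  apply (nbhd_mono _ _ _ _ HV). intros v Hv. apply H3; auto. exact (nbhd_pt _ _ _ HU).
Qed.

Lemma nbhd_scale T c N : scal_continuous T -> nbhd T vzero N ->
  nbhd T vzero (fun v => N (vscal c v)).
Proof.
  intros Hs H. rewrite <- (vscalz c) in H. destruct (Hs _ _ _ H) as [d [U [Hd [HU H3]]]].
  apply (nbhd_mono _ _ _ _ HU). intros u Hu. apply H3; auto. unfold Rminus; rewrite Rplus_opp_r, Rabs_R0; exact Hd.
Qed.

Lemma acx_bal (V : E -> Prop) v r : absolutely_convex V -> V v -> Rabs r <= 1 -> V (vscal r v).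
Proof.
  intros H Hv Hr. assert (H2 := H v v r 0 Hv Hv). rewrite vscal0, vadd_0 in H2. apply H2.
  rewrite Rabs_R0; lra.
Qed.

Lemma acx_0 (V : E -> Prop) v : absolutely_convex V -> V v -> V vzero.
Proof. intros H Hv. rewrite <- (vscal0 v). apply acx_bal; auto. rewrite Rabs_R0; lra. Qed.

Lemma acx_convex (V : E -> Prop) : absolutely_convex V -> convex V.
Proof.
  intros H x y t Hx Hy Ht. apply H; auto. rewrite !Rabs_pos_eq by lra. lra.
Qed.

Lemma cb_acx (W : E -> Prop) : convex W -> W vzero ->
  (forall v r, W v -> Rabs r <= 1 -> W (vscal r v)) -> absolutely_convex W.
Proof.
  intros Hc H0 Hb x y p q Hx Hy Hpq.
  destruct (Req_dec p 0) as [Hp|Hp].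
  { subst p. rewrite vscal0, v0l. apply Hb; auto. pose proof (Rabs_pos q). rewrite Rabs_R0 in Hpq. lra. }
  destruct (Req_dec q 0) as [Hq|Hq].
  { subst q. rewrite vscal0, vadd_0. apply Hb; auto. pose proof (Rabs_pos p). rewrite Rabs_R0 in Hpq. lra. }
  pose proof (Rabs_pos_lt p Hp). pose proof (Rabs_pos_lt q Hq).
  set (s := Rabs p + Rabs q). set (t := Rabs p / s).
  assert (Hs : 0 < s) by (unfold s; lra).
  assert (Ht : 0 < t < 1).
  { unfold t; split. apply Rdiv_lt_0_compat; lra. apply (Rmult_lt_reg_r s); auto. unfold Rdiv. rewrite Rmult_assoc, Rinv_l by lra. unfold s; lra. }
  assert (E1 : vscal p x = vscal t (vscal (p / t) x)).
  { rewrite vscal_assoc. f_equal. field. lra. }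
  assert (E2 : vscal q y = vscal (1 - t) (vscal (q / (1 - t)) y)).
  { rewrite vscal_assoc. f_equal. field. lra. }
  rewrite E1, E2. apply Hc; [apply Hb; auto | apply Hb; auto | lra].
  - assert (Rabs (p / t) = s).
    { unfold Rdiv. rewrite Rabs_mult, Rabs_inv, (Rabs_pos_eq t) by lra. unfold t. field. split; lra. }
    unfold s in *; lra.
  - assert (Rabs (q / (1 - t)) = s).
    { assert (Ht1 : 1 - t = Rabs q / s) by (unfold t, s; field; lra).
      unfold Rdiv. rewrite Rabs_mult, Rabs_inv, (Rabs_pos_eq (1 - t)) by lra. rewrite Ht1. field. split; lra. }
    unfold s in *; lra.
Qed.

Lemma lc_acx_nbhd T N : lc_topology T -> nbhd T vzero N ->
  exists W, absolutely_convex W /\ nbhd T vzero W /\ subset W N.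
Proof.
  intros [Ht [Ha [Hs [Hh Hl]]]] HN.
  destruct (Hl _ HN) as [C [HC [Hcv HCN]]].
  assert (HC' : nbhd T (vscal 0 vzero) C) by (rewrite vscal0; exact HC).
  destruct (Hs _ _ _ HC') as [d [U [Hd [HU H3]]]].
  exists (fun v => forall c, Rabs c <= 1 -> C (vscal c v)). split; [|split].
  - apply cb_acx.
    + intros x y t Hx Hy Htt c Hc. rewrite vscal_distr_l, !(vscal_comm c). apply Hcv; auto.
    + intros c _. rewrite vscalz. exact (nbhd_pt _ _ _ HC).
    + intros v r Hv Hr c Hc. rewrite vscal_assoc. apply Hv. rewrite Rabs_mult.
      pose proof (Rabs_pos c); pose proof (Rabs_pos r). nra.
  - apply (nbhd_mono _ _ _ _ (nbhd_scale _ (2 / d) _ Hs HU)).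
    intros v Hv c Hc. replace (vscal c v) with (vscal (c * d / 2) (vscal (2 / d) v)).
    + apply H3; auto. rewrite Rminus_0_r. unfold Rdiv. rewrite !Rabs_mult, Rabs_inv, (Rabs_pos_eq d), (Rabs_pos_eq 2) by lra.
      pose proof (Rabs_pos c). apply (Rmult_lt_reg_r 2); [lra|]. field_simplify; nra.
    + rewrite vscal_assoc. f_equal. field. lra.
  - intros v Hv. rewrite <- (vscal_1 v). apply HCN, Hv. rewrite Rabs_R1; lra.
Qed.

Lemma bounded_pt T x : lc_topology T -> vbounded T (fun y => y = x).
Proof.
  intros [Ht [Ha [Hs _]]] U HU. rewrite <- (vscal0 x) in HU.
  destruct (Hs _ _ _ HU) as [d [U' [Hd [HU' H3]]]].
  exists (2 / d). split. apply Rdiv_lt_0_compat; lra.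
  intros s Hs2 b Hb. subst b. assert (Hsp : 0 < Rabs s) by (assert (0 < 2/d) by (apply Rdiv_lt_0_compat; lra); lra).
  assert (Hs0 : s <> 0) by (intro; subst; rewrite Rabs_R0 in Hsp; lra).
  exists (vscal (/ s) x). split.
  - apply H3. 2: exact (nbhd_pt _ _ _ HU'). rewrite Rminus_0_r, Rabs_inv.
    apply (Rmult_lt_reg_r (Rabs s)); auto. rewrite Rinv_l by lra.
    apply (Rmult_le_compat_l d) in Hs2; [|lra]. unfold Rdiv in Hs2. field_simplify in Hs2; lra.
  - rewrite vscal_inv; auto.
Qed.

Lemma absorbs_sub (U U' A A' : E -> Prop) : absorbs U A -> subset U U' -> subset A' A -> absorbs U' A'.
Proof.
  intros [t [Ht H]] HU HA. exists t; split; auto. intros s Hs b Hb.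
  destruct (H s Hs b (HA b Hb)) as [u [Hu Hbu]]. exists u; auto.
Qed.

End T.

Section XI.
Context {E : VectorSpace} (tau : (E -> Prop) -> Prop) (Htau : lc_topology tau).

Definition acbv (V : E -> Prop) : Prop := absolutely_convex V /\ bornivorous tau V.

Definition xi : (E -> Prop) -> Prop :=
  fun O => forall x, O x -> exists V, acbv V /\ forall v, V v -> O (vadd x v).

Lemma acbv_0 V : acbv V -> V vzero.
Proof.
  intros [Hc Hb]. destruct (Hb _ (bounded_pt tau vzero Htau)) as [t [Ht H]].
  destruct (H t) with (b := @vzero E) as [u [Hu _]]; auto. rewrite Rabs_pos_eq; lra.
  exact (acx_0 _ _ Hc Hu).
Qed.

Lemma acbv_full : acbv (fun _ => True).
Proof.
  split. intros x y a b _ _ _; auto. intros A _. exists 1. split. lra. intros s Hs b _.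
  exists (vscal (/ s) b). split; auto. rewrite vscal_inv; auto. intro; subst; rewrite Rabs_R0 in Hs; lra.
Qed.

Lemma acbv_inter V W : acbv V -> acbv W -> acbv (fun x => V x /\ W x).
Proof.
  intros [Hv Hbv] [Hw Hbw]. split.
  - intros x y a b [Hx1 Hx2] [Hy1 Hy2] H; split; auto.
  - intros A HA. destruct (Hbv A HA) as [t1 [Ht1 H1]]. destruct (Hbw A HA) as [t2 [Ht2 H2]].
    exists (Rmax t1 t2). split. apply (Rlt_le_trans _ t1); auto; apply Rmax_l.
    intros s Hs b Hb. destruct (H1 s) with b as [u1 [Hu1 E1]]; auto. apply (Rle_trans _ _ _ (Rmax_l t1 t2)); auto.
    destruct (H2 s) with b as [u2 [Hu2 E2]]; auto. apply (Rle_trans _ _ _ (Rmax_r t1 t2)); auto.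
    exists u1. split; auto. split; auto. assert (u1 = u2). apply (vscal_inj s).
    intro; subst; rewrite Rabs_R0 in Hs; pose proof (Rmax_l t1 t2); lra. congruence. subst; auto.
Qed.

Lemma acbv_scale V c : acbv V -> c <> 0 -> acbv (fun v => V (vscal c v)).
Proof.
  intros [Hv Hbv] Hc. split.
  - intros x y a b Hx Hy H. rewrite vscal_distr_l, !(vscal_comm c). apply Hv; auto.
  - intros A HA. destruct (Hbv A HA) as [t [Ht H]]. exists (t * Rabs c).
    pose proof (Rabs_pos_lt c Hc). split. nra.
    intros s Hs b Hb. destruct (H (s / c)) with b as [u [Hu Eu]]; auto.
    + unfold Rdiv; rewrite Rabs_mult, Rabs_inv. apply (Rmult_le_reg_r (Rabs c)); auto.
      rewrite Rmult_assoc, Rinv_l by lra. lra.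
    + exists (vscal (/ c) u). split. rewrite vscal_inv; auto.
      rewrite Eu, vscal_assoc. reflexivity.
Qed.

Definition half (V : E -> Prop) : E -> Prop := fun v => V (vscal 2 v).

Lemma half_add V v w : acbv V -> half V v -> half V w -> V (vadd v w).
Proof.
  intros [Hv _] H1 H2. assert (H := Hv _ _ (/2) (/2) H1 H2).
  rewrite !vscal_assoc, Rinv_l, !vscal_1 in H by lra. apply H. rewrite Rabs_pos_eq; lra.
Qed.

Lemma xi_nbhd x N : nbhd xi x N <-> exists V, acbv V /\ forall v, V v -> N (vadd x v).
Proof.
  split.
  - intros [O [HO [Hx HON]]]. destruct (HO x Hx) as [V [HV H]]. exists V; split; auto.
  - intros [V [HV H]]. exists (fun z => exists W, acbv W /\ forall w, W w -> N (vadd z w)).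
    split; [|split].
    + intros z [W [HW Hz]]. exists (half W). split. apply acbv_scale; auto; lra.
      intros w' Hw'. exists (half W). split. apply acbv_scale; auto; lra.
      intros w Hw. rewrite <- vadd_assoc. apply Hz. apply half_add; auto.
    + exists V; auto.
    + intros z [W [HW Hz]]. rewrite <- (vadd_0 z). apply Hz, acbv_0; auto.
Qed.

Lemma xi_nbhd_intro x V : acbv V -> nbhd xi x (fun z => exists v, V v /\ z = vadd x v).
Proof. intro HV. apply xi_nbhd. exists V; split; auto. intros v Hv; exists v; auto. Qed.

Lemma xi_top : is_topology xi.
Proof.
  split; [|split].
  - intros x _. exists (fun _ => True). split; auto. apply acbv_full.
  - intros U V HU HV x [Hx1 Hx2]. destruct (HU x Hx1) as [V1 [H1 H1']]. destruct (HV x Hx2) as [V2 [H2 H2']].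
    exists (fun v => V1 v /\ V2 v). split. apply acbv_inter; auto. intros v [? ?]; split; auto.
  - intros F HF x [U [HFU HUx]]. destruct (HF U HFU x HUx) as [V [HV H]]. exists V; split; auto.
    intros v Hv. exists U; split; auto.
Qed.

Lemma xi_add : add_continuous xi.
Proof.
  intros x y W HW. apply xi_nbhd in HW. destruct HW as [V [HV H]].
  assert (HH : acbv (half V)) by (apply acbv_scale; auto; lra).
  exists (fun z => exists v, half V v /\ z = vadd x v), (fun z => exists v, half V v /\ z = vadd y v).
  split; [apply xi_nbhd_intro; auto|split; [apply xi_nbhd_intro; auto|]].
  intros u w [v1 [Hv1 ->]] [v2 [Hv2 ->]]. rewrite vadd_swap4. apply H. apply half_add; auto.
Qed.

Lemma xi_scal : scal_continuous xi.
Proof.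
  intros a x W HW. apply xi_nbhd in HW. destruct HW as [V [HV H]].
  assert (HH : acbv (half V)) by (apply acbv_scale; auto; lra).
  destruct (proj2 HH _ (bounded_pt tau x Htau)) as [t [Ht Habs]].
  set (k := Rabs a + 1). assert (Hk : 0 < k) by (unfold k; pose proof (Rabs_pos a); lra).
  assert (HH2 : acbv (fun v => half V (vscal k v))) by (apply acbv_scale; auto; lra).
  exists (Rmin (/ t) 1), (fun z => exists v, half V (vscal k v) /\ z = vadd x v).
  split. apply Rmin_glb_lt. apply Rinv_0_lt_compat; auto. lra.
  split. apply xi_nbhd_intro; auto.
  intros b u Hb [v [Hv ->]].
  rewrite vscal_distr_l, (vscal_split a b x), <- vadd_assoc. apply H. apply half_add; auto.
  - destruct (Req_dec (b - a) 0) as [H0|H0].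
    + rewrite H0, vscal0. apply acbv_0; auto.
    + destruct (Habs (/ (b - a))) with x as [u [Hu Eu]]; auto.
      rewrite Rabs_inv. apply (Rmult_le_reg_r (Rabs (b - a))). apply Rabs_pos_lt; auto.
      rewrite Rinv_l. 2: apply Rabs_no_R0; auto.
      assert (Rabs (b - a) < / t) by (pose proof (Rmin_l (/t) 1); lra).
      apply (Rmult_lt_compat_l t) in H1; auto. rewrite Rinv_r in H1 by lra. lra.
      rewrite Eu, vscal_assoc, Rinv_r, vscal_1; auto.
  - replace (vscal b v) with (vscal (b / k) (vscal k v)).
    + apply acx_bal; auto. apply HH. unfold Rdiv. rewrite Rabs_mult, Rabs_inv, (Rabs_pos_eq k) by lra.
      apply (Rmult_le_reg_r k); auto. rewrite Rmult_assoc, Rinv_l by lra.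
      assert (Rabs (b - a) < 1) by (pose proof (Rmin_r (/t) 1); lra).
      pose proof (Rabs_triang_inv b a). unfold k; lra.
    + rewrite vscal_assoc. f_equal. field. lra.
Qed.

Lemma finer_nbhd zeta x N : lc_topology zeta ->
  (forall A, vbounded tau A -> vbounded zeta A) -> nbhd zeta x N -> nbhd xi x N.
Proof.
  intros Hz Hb HN. destruct Hz as [Hzt [Hza Hzr]].
  assert (H0 := nbhd_to0 _ _ _ Hza HN).
  destruct (lc_acx_nbhd zeta _ (conj Hzt (conj Hza Hzr)) H0) as [W [HW [HW0 HWs]]].
  apply xi_nbhd. exists W. split; auto. split; auto. intros A HA. apply (Hb A HA W HW0).
Qed.

Lemma tau_xi_nbhd x N : nbhd tau x N -> nbhd xi x N.
Proof. apply finer_nbhd; auto. Qed.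

Lemma xi_lc : lc_topology xi.
Proof.
  split; [apply xi_top|split; [apply xi_add|split; [apply xi_scal|split]]].
  - intros x y Hxy. destruct Htau as [_ [_ [_ [Hh _]]]]. destruct (Hh x y Hxy) as [U [V [HU [HV H]]]].
    exists U, V. split. apply tau_xi_nbhd; auto. split; auto. apply tau_xi_nbhd; auto.
  - intros N HN. apply xi_nbhd in HN. destruct HN as [V [HV H]]. exists V. split; [|split].
    + apply xi_nbhd. exists V; split; auto. intros v Hv; rewrite v0l; auto.
    + apply acx_convex, HV.
    + intros v Hv. rewrite <- (v0l v); auto.
Qed.

Lemma xi_bounded A : vbounded xi A <-> vbounded tau A.
Proof.
  split.
  - intros H U HU. apply H, tau_xi_nbhd, HU.
  - intros H U HU. apply xi_nbhd in HU. destruct HU as [V [HV HVU]].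
    apply (absorbs_sub V U A A); auto. apply HV, H. intros v Hv; rewrite <- (v0l v); auto. intros a Ha; auto.
Qed.

Lemma xi_finest zeta : lc_topology zeta -> (forall A, vbounded zeta A <-> vbounded tau A) ->
  forall U, zeta U -> xi U.
Proof.
  intros Hz Hb U HU x Hx. assert (HN : nbhd zeta x U) by (exists U; repeat split; auto; intros y Hy; auto).
  apply finer_nbhd in HN; auto. apply xi_nbhd in HN; auto. intros A HA; apply Hb; auto.
Qed.

Lemma xi_born : bornological tau -> forall U, tau U <-> xi U.
Proof.
  intros Hbo U. split.
  - apply xi_finest; auto. intro; tauto.
  - intros HU. destruct Htau as [[Ht1 [Ht2 Ht3]] [Ha _]].
    assert (HUeq : U = (fun x => exists O, (tau O /\ subset O U) /\ O x)).
    { apply functional_extensionality; intro x. apply propositional_extensionality. split.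
      - intro Hx. destruct (HU x Hx) as [V [[HV1 HV2] HV]].
        assert (HN := nbhd_from0 tau x V Ha (Hbo V HV1 HV2)).
        destruct HN as [O [HO [HOx HOs]]]. exists O. split; auto. split; auto.
        intros z Hz. rewrite <- (vsub_l x z). apply HV, HOs, Hz.
      - intros [O [[_ HO] Hx]]. auto. }
    rewrite HUeq. apply Ht3. intros O [HO _]; auto.
Qed.

End XI.

Section GB.
Context {E : VectorSpace} (tau : (E -> Prop) -> Prop) (Htau : lc_topology tau)
  (B : nat -> E -> Prop) (HB : fundamental_bounded_seq tau B).

Definition cf (al : nat -> nat) (n : nat) : R := / (INR (al n) + 1).

Lemma cf_pos al n : 0 < cf al n.
Proof. unfold cf. apply Rinv_0_lt_compat. pose proof (pos_INR (al n)); lra. Qed.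

Definition Gen (al : nat -> nat) (k : nat) : E -> Prop :=
  fun x => exists i b, (i < k)%nat /\ B i b /\ x = vscal (cf al i) b.

Definition hull (G : E -> Prop) : E -> Prop :=
  fun x => forall C, absolutely_convex C -> subset G C -> C x.

Lemma hull_acx G : absolutely_convex (hull G).
Proof. intros x y a b Hx Hy H C HC HG. apply HC; [apply Hx|apply Hy|]; auto. Qed.

Lemma hull_sub G : subset G (hull G).
Proof. intros x Hx C HC HG. auto. Qed.

Lemma hull_min G C : absolutely_convex C -> subset G C -> subset (hull G) C.
Proof. intros HC HG x Hx. apply Hx; auto. Qed.

Definition Sk (k : nat) (al : nat -> nat) : E -> Prop := hull (Gen al k).
Definition Ub (al : nat -> nat) : E -> Prop := fun x => exists k, Sk k al x.

Lemma Sk_mono k k' al : (k <= k')%nat -> subset (Sk k al) (Sk k' al).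
Proof.
  intros Hk. apply hull_min. apply hull_acx. intros x [i [b [Hi [Hb ->]]]].
  apply hull_sub. exists i, b. split; auto. lia.
Qed.

Lemma Ub_acx al : absolutely_convex (Ub al).
Proof.
  intros x y a b [k1 Hx] [k2 Hy] H. exists (Nat.max k1 k2). apply hull_acx; auto.
  apply (Sk_mono k1); auto; lia. apply (Sk_mono k2); auto; lia.
Qed.

Lemma absorbs_scaled (V A : E -> Prop) c : absolutely_convex V -> 0 < c ->
  (forall b, A b -> V (vscal c b)) -> absorbs V A.
Proof.
  intros HV Hc H. exists (/ c). split. apply Rinv_0_lt_compat; auto.
  intros s Hs b Hb. assert (Hs0 : 0 < Rabs s) by (pose proof (Rinv_0_lt_compat c Hc); lra).
  assert (Hs1 : s <> 0) by (intro; subst; rewrite Rabs_R0 in Hs0; lra).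
  exists (vscal (/ s) b). split.
  - replace (vscal (/ s) b) with (vscal (/ (s * c)) (vscal c b)).
    + apply acx_bal; auto. rewrite Rabs_inv, Rabs_mult, (Rabs_pos_eq c) by lra.
      apply (Rmult_le_reg_r (Rabs s * c)). nra. rewrite Rinv_l by nra.
      apply (Rmult_le_compat_r c) in Hs; [|lra]. rewrite Rinv_l in Hs by lra. lra.
    + rewrite vscal_assoc. f_equal. field. split; lra.
  - rewrite vscal_inv; auto.
Qed.

Lemma Ub_acbv al : acbv tau (Ub al).
Proof.
  split. apply Ub_acx. intros A HA. destruct HB as [_ HB2]. destruct (HB2 A HA) as [n Hn].
  apply (absorbs_sub (Ub al) (Ub al) (B n) A); [|intros x; auto|auto].
  apply (absorbs_scaled _ _ (cf al n)). apply Ub_acx. apply cf_pos.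
  intros b Hb. exists (S n). apply hull_sub. exists n, b. split; auto.
Qed.

Lemma Ub_mono al be : (forall i, (al i <= be i)%nat) -> subset (Ub be) (Ub al).
Proof.
  intros H x [k Hx]. exists k. revert x Hx. apply hull_min. apply hull_acx.
  intros x [i [b [Hi [Hb ->]]]].
  replace (vscal (cf be i) b) with (vscal (cf be i / cf al i) (vscal (cf al i) b)).
  - apply acx_bal. apply hull_acx. apply hull_sub. exists i, b; auto.
    pose proof (cf_pos al i). pose proof (cf_pos be i).
    rewrite Rabs_pos_eq. 2: apply Rlt_le, Rdiv_lt_0_compat; auto.
    unfold cf. assert (Hle := le_INR _ _ (H i)). pose proof (pos_INR (al i)).
    unfold Rdiv. rewrite Rinv_inv. apply (Rmult_le_reg_r (INR (be i) + 1)). lra.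
    rewrite (Rmult_comm (/ _)), Rmult_assoc, Rinv_l by lra. lra.
  - rewrite vscal_assoc. f_equal. field. pose proof (cf_pos al i); lra.
Qed.

Lemma Sk_local k al be : (forall i, (i < k)%nat -> al i = be i) -> subset (Sk k al) (Sk k be).
Proof.
  intros H. apply hull_min. apply hull_acx. intros x [i [b [Hi [Hb ->]]]].
  apply hull_sub. exists i, b. split; auto. split; auto. unfold cf. rewrite H; auto.
Qed.

Lemma Ub_base V : acbv tau V -> exists al, subset (Ub al) V.
Proof.
  intros [HV HbV].
  assert (Hex : forall n, exists m : nat, forall b, B n b -> V (vscal (/ (INR m + 1)) b)).
  { intro n. destruct HB as [HB1 _]. destruct (HbV _ (HB1 n)) as [t [Ht H]].
    destruct (INR_unbounded t) as [m Hm]. exists m. intros b Hb.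
    destruct (H (INR m + 1)) with b as [u [Hu ->]]; auto.
    rewrite Rabs_pos_eq; pose proof (pos_INR m); lra.
    rewrite vscal_assoc, Rinv_l, vscal_1; auto. pose proof (pos_INR m); lra. }
  exists (fun n => proj1_sig (constructive_indefinite_description _ (Hex n))).
  intros x [k Hx]. revert x Hx. apply hull_min; auto.
  intros x [i [b [Hi [Hb ->]]]]. unfold cf.
  exact (proj2_sig (constructive_indefinite_description _ (Hex i)) b Hb).
Qed.

Lemma Gbase : has_G_base (xi tau).
Proof.
  exists Ub. split; [|split].
  - intro al. apply xi_nbhd; auto. exists (Ub al). split. apply Ub_acbv. intros v Hv; rewrite v0l; auto.
  - intros N HN. apply xi_nbhd in HN; auto. destruct HN as [V [HV H]].
    destruct (Ub_base V HV) as [al Hal]. exists al. intros v Hv. rewrite <- (v0l v). auto.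
  - intros al be H. apply Ub_mono; auto.
Qed.

End GB.

Fixpoint code (l : list nat) : nat :=
  match l with nil => 0%nat | h :: t => S (Cantor.to_nat (h, code t)) end.

Lemma code_inj l1 l2 : code l1 = code l2 -> l1 = l2.
Proof.
  revert l2; induction l1 as [|h t IH]; intros [|h2 t2]; cbn [code]; try discriminate; auto.
  intro Hc0. assert (Hc : Cantor.to_nat (h, code t) = Cantor.to_nat (h2, code t2)) by (apply (f_equal Nat.pred) in Hc0; exact Hc0).
  apply (f_equal Cantor.of_nat) in Hc. rewrite !Cantor.cancel_of_to in Hc.
  injection Hc as -> Hc. f_equal; auto.
Qed.

Definition ext (be : nat -> nat) (l : list nat) : Prop :=
  forall i, (i < length l)%nat -> be i = nth i l 0%nat.

Definition upd (be : nat -> nat) (k m : nat) : nat -> nat :=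
  fun i => if Nat.eqb i k then m else be i.

Lemma ext_upd be l m : ext be l -> ext (upd be (length l) m) (l ++ m :: nil).
Proof.
  intros H i Hi. rewrite length_app in Hi; simpl in Hi. unfold upd.
  destruct (Nat.eqb_spec i (length l)) as [->|Hne].
  - rewrite nth_middle; auto.
  - rewrite app_nth1 by lia. apply H; lia.
Qed.

Lemma upd_ge be k m : (be k <= m)%nat -> forall i, (be i <= upd be k m i)%nat.
Proof. intros H i. unfold upd. destruct (Nat.eqb_spec i k); subst; lia. Qed.

Lemma ext_app be l l2 : ext be (l ++ l2) -> ext be l.
Proof. intros H i Hi. rewrite H by (rewrite length_app; lia). apply app_nth1; auto. Qed.

Fixpoint pref (g : list nat -> nat) (k : nat) : list nat :=
  match k with O => nil | S k => pref g k ++ g (pref g k) :: nil end.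

Lemma length_pref g k : length (pref g k) = k.
Proof. induction k; simpl; auto. rewrite length_app, IHk; simpl; lia. Qed.

Lemma ext_pref g k : ext (fun i => g (pref g i)) (pref g k).
Proof.
  induction k; intros i Hi; simpl in *. lia.
  rewrite length_app, length_pref in Hi; simpl in Hi.
  destruct (Nat.eq_dec i k) as [->|Hne].
  - assert (Hn := nth_middle (pref g k) nil (g (pref g k)) 0%nat). rewrite length_pref in Hn. rewrite Hn. reflexivity.
  - rewrite app_nth1 by (rewrite length_pref; lia). apply IHk. rewrite length_pref; lia.
Qed.

Lemma list_bound {X : Type} (P : nat -> X -> Prop) :
  (forall v, exists m, forall m', (m <= m')%nat -> P m' v) ->
  forall L, exists M, forall v, In v L -> forall m', (M <= m')%nat -> P m' v.
Proof.
  intros H L. induction L as [|a L IH]. exists 0%nat; intros v [].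
  destruct IH as [M HM]. destruct (H a) as [m Hm]. exists (Nat.max M m).
  intros v [<-|Hv] m' Hm'. apply Hm; lia. apply HM; auto; lia.
Qed.

Section PY.
Context {E : VectorSpace} (tau : (E -> Prop) -> Prop) (Htau : lc_topology tau)
  (B : nat -> E -> Prop) (HB : fundamental_bounded_seq tau B).

Definition Dl (l : list nat) : E -> Prop := fun v => forall be, ext be l -> Ub B be v.
Definition Dset (x : E) (n : nat) : E -> Prop :=
  fun y => exists l v, code l = n /\ Dl l v /\ y = vadd x v.

Lemma sep v : v <> vzero -> exists al, ~ Ub B al v.
Proof.
  intro Hv. destruct Htau as [_ [_ [_ [Hh _]]]]. destruct (Hh v vzero Hv) as [U1 [V1 [HU1 [HV1 Hd]]]].
  apply (tau_xi_nbhd tau Htau) in HV1. apply xi_nbhd in HV1; auto. destruct HV1 as [W [HW HWV]].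
  destruct (Ub_base tau B HB W HW) as [al Hal]. exists al. intro Hu.
  apply (Hd v). split. exact (nbhd_pt _ _ _ HU1). rewrite <- (v0l v). apply HWV, Hal, Hu.
Qed.

Lemma Pyt : strong_Pytkeev (xi tau).
Proof.
  intros x. exists (Dset x). intros U A HU Hcl HnA.
  apply NNPP; intro H.
  apply xi_nbhd in HU; auto. destruct HU as [V [HV HVU]].
  destruct (Ub_base tau B HB V HV) as [a0 Ha0].
  set (good := fun l : list nat => forall i, (i < length l)%nat -> (a0 i <= nth i l 0)%nat).
  assert (F2 : forall l, good l -> finite_set (fun y => Dset x (code l) y /\ A y)).
  { intros l Hg. apply NNPP. intro Hf. apply H. exists (code l); split; auto.
    intros y [l0 [v [Hc [Hv ->]]]]. apply code_inj in Hc; subst l0. apply HVU, Ha0.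
    apply (Ub_mono B a0 (fun i => if Nat.ltb i (length l) then nth i l 0%nat else a0 i)).
    - intro i. destruct (Nat.ltb_spec i (length l)); auto.
    - apply Hv. intros i Hi. rewrite (proj2 (Nat.ltb_lt _ _) Hi); reflexivity. }
  assert (good_snoc : forall l m, good l -> (a0 (length l) <= m)%nat -> good (l ++ m :: nil)).
  { intros l m Hg Hm i Hi. rewrite length_app in Hi; simpl in Hi.
    destruct (Nat.eq_dec i (length l)) as [->|Hne]. rewrite nth_middle; auto.
    rewrite app_nth1 by lia. apply Hg; lia. }
  set (Inv := fun l => good l /\ forall v, Dl l v -> ~ A (vadd x v)).
  assert (Step : forall l, Inv l -> exists m, Inv (l ++ m :: nil)).
  { intros l [Hg Hi]. set (k := length l). set (l' := l ++ a0 k :: nil).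
    assert (Hl' : good l') by (apply good_snoc; auto).
    assert (Lv : forall v, exists mv, forall m', (mv <= m')%nat ->
               (fun m' v => Dl (l ++ m' :: nil) v -> A (vadd x v) -> False) m' v).
    { intro v. destruct (classic (exists be, ext be l /\ ~ Ub B be v)) as [[be [Hbe Hn]]|Hno].
      - exists (be k). intros m' Hm' HD HA. apply Hn. apply (Ub_mono B be (upd be k m')).
        apply upd_ge; auto. apply HD. apply ext_upd; auto.
      - exists 0%nat. intros m' _ HD HA. apply (Hi v); auto. intros be Hbe. apply NNPP; intro Hc.
        apply Hno; eauto. }
    destruct (F2 l' Hl') as [L HL].
    destruct (list_bound _ Lv (map (vadd (vopp x)) L)) as [M HM].
    exists (Nat.max M (a0 k)). split. apply good_snoc; auto; unfold k; lia.
    intros v HD HA. apply (HM v) with (m' := Nat.max M (a0 k)); auto; try lia.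
    rewrite <- (vsub_l' x v). apply in_map. apply HL. split; auto.
    exists l', v. split; auto. split; auto. intros be Hbe.
    apply (Ub_mono B be (upd be k (Nat.max M (a0 k)))).
    - apply upd_ge. rewrite (Hbe k). unfold l', k. rewrite nth_middle. lia.
      unfold l'. rewrite length_app; simpl; unfold k; lia.
    - apply HD. apply ext_upd. apply (ext_app _ _ _ Hbe). }
  assert (Hg : forall l, exists m, Inv l -> Inv (l ++ m :: nil)).
  { intro l. destruct (classic (Inv l)) as [Hl|Hl].
    destruct (Step l Hl) as [m Hm]; exists m; auto. exists 0%nat; tauto. }
  set (g := fun l => proj1_sig (constructive_indefinite_description _ (Hg l))).
  assert (Hgs : forall l, Inv l -> Inv (l ++ g l :: nil)).
  { intro l. exact (proj2_sig (constructive_indefinite_description _ (Hg l))). }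
  assert (Hinv : forall k, Inv (pref g k)).
  { induction k; simpl; auto. split. intros i Hi; simpl in Hi; lia.
    intros v Hv HA. destruct (classic (v = vzero)) as [->|Hne].
    - rewrite vadd_0 in HA; auto.
    - destruct (sep v Hne) as [al Hal]. apply Hal, Hv. intros i Hi; simpl in Hi; lia. }
  set (al := fun k => g (pref g k)).
  destruct (Hcl _ (xi_nbhd_intro tau Htau x (Ub B al) (Ub_acbv tau B HB al))) as [y [[v [[k Hv] ->]] HA]].
  apply (proj2 (Hinv k) v); auto. intros be Hbe. exists k.
  apply (Sk_local B k al be); auto. intros i Hi. rewrite Hbe by (rewrite length_pref; auto).
  exact (ext_pref g k i ltac:(rewrite length_pref; auto)).
Qed.

End PY.

Theorem mainTheorem16 (E : VectorSpace) (tau : (E -> Prop) -> Prop)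
  (Htau : lc_topology tau) (B : nat -> E -> Prop)
  (HB : fundamental_bounded_seq tau B) :
  exists xi : (E -> Prop) -> Prop,
    lc_topology xi /\
    (forall A : E -> Prop, vbounded xi A <-> vbounded tau A) /\
    (forall zeta : (E -> Prop) -> Prop, lc_topology zeta ->
       (forall A : E -> Prop, vbounded zeta A <-> vbounded tau A) ->
       forall U, zeta U -> xi U) /\
    has_G_base xi /\
    strong_Pytkeev xi /\
    (bornological tau -> forall U, tau U <-> xi U).
Proof.
  exists (xi tau). split; [apply xi_lc; auto|]. split; [apply xi_bounded; auto|].
  split; [apply xi_finest; auto|]. split; [apply (Gbase tau Htau B HB)|].
  split; [apply (Pyt tau Htau B HB)|]. apply xi_born; auto.
Qed.
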